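(* Let $A=\mathrm{diag}(G_1,\dots,G_m,[1])\in\mathbb{R}^{n\times n}$ (where the trailing block $[1]$ may or may not be present), with $G_j=\begin{bmatrix}c_j&s_j\\-s_j&c_j\end{bmatrix}$, $c_j^2+s_j^2=1$, $s_j\neq 0$, and $0<c_1<c_2<\cdots<c_m$. Let $v_0\in\mathbb{R}^n$ be a unit norm vector with $d(A,v_0)\geq 2$ and $v_0^{(1)}\neq 0$, and run the iteration ACI($1$) below. Then there exist an index $k_0$ and a number $0<\varrho<1$ such that for all $k\geq k_0$, $$\|v_{k+1}^{(j)}\|\leq\varrho\,\|v_k^{(j)}\|,\qquad j=2,\dots,m+1$$ (with $j=m+1$ included only when the block $[1]$ is present).
   Context: Block partitioning: every $v\in\mathbb{R}^n$ is written as $v=[v^{(1)};\dots;v^{(m)};v^{(m+1)}]$ with $v^{(j)}\in\mathbb{R}^2$ for $j=1,\dots,m$ (conforming with the blocks $G_j$) and $v^{(m+1)}\in\mathbb{R}$ (present only if the block $[1]$ is present). ACI($1$): for $k=0,1,2,\dots$: $\widetilde w_k=(A-\alpha_kI)v_k$ with $\alpha_k=v_k^TAv_k$; $w_k=\widetilde w_k/\|\widetilde w_k\|$; $\widetilde v_{k+1}=(A^T-\beta_kI)w_k$ with $\beta_k=w_k^TAw_k$; $v_{k+1}=\widetilde v_{k+1}/\|\widetilde v_{k+1}\|$. $d(A,v)$ is the grade of $v$ w.r.t. $A$ (degree of the monic polynomial $p$ of smallest degree with $p(A)v=0$); $\|\cdot\|$ is the Euclidean norm. *)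

(* Defs.v *)
From mathcomp Require Import all_boot all_order all_algebra.
From mathcomp Require Import boolp reals.
Set Implicit Arguments. Unset Strict Implicit. Unset Printing Implicit Defensive.
Import Order.TTheory GRing.Theory Num.Theory.
Local Open Scope ring_scope.

Section ACI.
Variable R : realType.

(* Dimension: n = 2m + b, where b = true iff the trailing block [1] is present. *)
Definition dimA (m : nat) (b : bool) : nat := (m.*2 + b)%N.

(* Block index (1-based, as in the paper) of the 0-based coordinate i:
   coordinates 2(j-1), 2(j-1)+1 form block j (j = 1..m); coordinate 2m is
   the block m+1 (the trailing [1], present only if b). *)
Definition blk (i : nat) : nat := (i./2).+1.

(* A = diag(G_1,...,G_m,[1]),  G_j = [[c_j, s_j], [-s_j, c_j]]. *)
Definition Amat (m : nat) (b : bool) (c s : nat -> R) : 'M[R]_(dimA m b) :=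
  \matrix_(i, k)
    if blk i == blk k then
      (if (blk i <= m)%N then
         match odd i, odd k with
         | false, false => c (blk i)
         | false, true  => s (blk i)
         | true,  false => - s (blk i)
         | true,  true  => c (blk i)
         end
       else 1)
    else 0.

Definition vnorm n (x : 'cV[R]_n) : R := Num.sqrt (\sum_i x i 0 ^+ 2).

Definition bnorm n (x : 'cV[R]_n) (j : nat) : R :=
  Num.sqrt (\sum_(i : 'I_n | blk i == j) x i 0 ^+ 2).

Definition peval n (A : 'M[R]_n) (p : {poly R}) (v : 'cV[R]_n) : 'cV[R]_n :=
  \sum_(i < size p) p`_i *: iter i (fun x => A *m x) v.

Definition annih_deg n (A : 'M[R]_n) (v : 'cV[R]_n) (d : nat) : Prop :=
  exists p : {poly R}, [/\ p \is monic, size p = d.+1 & peval A p v = 0].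

(* grade d(A,v): degree of the monic polynomial of smallest degree with
   p(A) v = 0 (such a polynomial always exists, e.g. the characteristic
   polynomial; the default 0 in the other branch is never used). *)
Definition grade n (A : 'M[R]_n) (v : 'cV[R]_n) : nat :=
  match pselect (exists d, annih_deg A v d) with
  | left H =>
      @ex_minn (fun d => `[< annih_deg A v d >])
        (let: ex_intro d Hd := H in ex_intro _ d (asboolT Hd))
  | right _ => 0%N
  end.

Definition normalize n (x : 'cV[R]_n) : 'cV[R]_n := (vnorm x)^-1 *: x.

Definition rayq n (A : 'M[R]_n) (x : 'cV[R]_n) : R := (x^T *m A *m x) 0 0.

Definition aci_w n (A : 'M[R]_n) (v : 'cV[R]_n) : 'cV[R]_n :=
  normalize ((A - (rayq A v)%:M) *m v).

Definition aci_step n (A : 'M[R]_n) (v : 'cV[R]_n) : 'cV[R]_n :=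
  let w := aci_w A v in normalize ((A^T - (rayq A w)%:M) *m w).

Definition aci_v n (A : 'M[R]_n) (v0 : 'cV[R]_n) (k : nat) : 'cV[R]_n :=
  iter k (aci_step A) v0.

End ACI.

(* Main.v *)
Require Import Defs.
From mathcomp Require Import all_boot all_order all_algebra.
From mathcomp Require Import boolp reals.
From mathcomp Require Import ring lra zify.
Set Implicit Arguments. Unset Strict Implicit. Unset Printing Implicit Defensive.
Import Order.TTheory GRing.Theory Num.Theory.
Local Open Scope ring_scope.


Definition partner (i : nat) : nat := if odd i then i.-1 else i.+1.

Lemma half_partner i : (partner i)./2 = i./2.
Proof.
rewrite /partner; move: (odd_double_half i).
case: (odd i) => /= E.
  by rewrite -{1}E add1n /= doubleK.
by rewrite -{1}E add0n uphalf_double.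
Qed.

Lemma partner_neq i : partner i != i.
Proof.
rewrite /partner; case: i => [|i] //=; case: (odd i) => //=.
by rewrite eqSS; elim: i => //.
by rewrite ltn_eqF.
Qed.

Lemma partnerK i : partner (partner i) = i.
Proof.
rewrite /partner; case: i => [|i] //=; case Ho: (odd i) => //=.
by rewrite Ho.
by rewrite Ho.
Qed.

Lemma half_eq k i : k./2 = i./2 -> k = i \/ k = partner i.
Proof.
move=> H; rewrite /partner.
move: (odd_double_half k) (odd_double_half i); rewrite H.
set h := (i./2).*2.
case: (odd i); case: (odd k) => /= <- <-; rewrite ?add0n ?add1n /=; auto.
Qed.

Lemma odd_partner i : odd (partner i) = ~~ odd i.
Proof. rewrite /partner; case: i => [|i] //=; case Ho: (odd i) => /=; by rewrite ?Ho. Qed.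

Section Blocks.
Variable R : realType.
Variables (m : nat) (b : bool) (c : nat -> R).
Local Notation n := (dimA m b).

Lemma blk_le i : (blk i <= m)%N = (i < m.*2)%N.
Proof. by rewrite /blk ltn_half_double. Qed.

Lemma partner_lt i : (partner i < m.*2)%N = (i < m.*2)%N.
Proof. by rewrite -!ltn_half_double half_partner. Qed.

Lemma partner_lt_nat (j : nat) : (j < m.*2 + b)%N -> (partner j < m.*2 + b)%N = (j < m.*2)%N.
Proof.
move=> Hin.
case Hi: (j < m.*2)%N.
  by apply: (leq_trans (_ : partner j < m.*2)%N); rewrite ?partner_lt // leq_addr.
move: Hi Hin; rewrite /partner.
move: (odd_double_half j); rewrite -ltn_half_double.
move: (j./2) => h1.
case: (odd j) => /= E; rewrite -E; case: b => /=; lia.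
Qed.

Lemma partner_lt_n (i : 'I_n) : (partner i < n)%N = (i < m.*2)%N.
Proof. exact: partner_lt_nat (ltn_ord i).
Qed.

Definition pip (i : 'I_n) : 'I_n := insubd i (partner i).

Lemma val_pi (i : 'I_n) : val (pip i) = if (i < m.*2)%N then partner i else i.
Proof. by rewrite /pip val_insubd partner_lt_n. Qed.

Lemma blk_pi i : blk (pip i) = blk i.
Proof. by rewrite val_pi; case: ifP => // _; rewrite /blk half_partner. Qed.

Lemma piK : involutive pip.
Proof.
move=> i; apply: val_inj; rewrite !val_pi.
case Hi: (i < m.*2)%N; last by rewrite Hi.
by rewrite partner_lt Hi partnerK.
Qed.

Lemma pi_lt (i : 'I_n) : (pip i < m.*2)%N = (i < m.*2)%N.
Proof. by rewrite val_pi; case Hi: (i < m.*2)%N; rewrite ?partner_lt Hi. Qed.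

Lemma odd_pi (i : 'I_n) : (i < m.*2)%N -> odd (pip i) = ~~ odd i.
Proof. by move=> H; rewrite val_pi H odd_partner. Qed.

Lemma pi_neq (i : 'I_n) : (i < m.*2)%N -> pip i != i.
Proof. by move=> H; rewrite -val_eqE /= val_pi H partner_neq. Qed.

Lemma pi_id (i : 'I_n) : ~~ (i < m.*2)%N -> pip i = i.
Proof. by move=> /negbTE H; apply: val_inj; rewrite val_pi H. Qed.

Lemma blk_eqP (k i : 'I_n) : (blk k == blk i) = (k == i) || (k == pip i).
Proof.
apply/idP/idP.
  move/eqP; rewrite /blk => /eqP; rewrite eqSS => /eqP /half_eq [] H.
    by apply/orP; left; apply/eqP/val_inj.
  case Hi: (i < m.*2)%N.
    by apply/orP; right; apply/eqP/val_inj; rewrite /= val_pi Hi.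
  by have := partner_lt_n i; rewrite Hi -H ltn_ord.
by case/orP => /eqP ->; rewrite ?blk_pi.
Qed.

Lemma sum_pair (F G : 'I_n -> R) :
  (forall i, F i + F (pip i) = G i + G (pip i)) -> \sum_i F i = \sum_i G i.
Proof.
move=> H.
have EF : \sum_i F i = \sum_i F (pip i).
  by rewrite (reindex_inj (can_inj piK)).
have EG : \sum_i G i = \sum_i G (pip i).
  by rewrite (reindex_inj (can_inj piK)).
have : (\sum_i F i) + (\sum_i F i) = (\sum_i G i) + (\sum_i G i).
  rewrite {2}EF {2}EG -!big_split /=.
  by apply: eq_bigr => i _; apply: H.
move=> HH; lra.
Qed.

End Blocks.


Section Mat.
Variable R : realType.
Variables (m : nat) (b : bool) (c : nat -> R).
Local Notation n := (dimA m b).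
Local Notation pi := (@pip m b).

Definition Cc (j : nat) : R := if (j <= m)%N then c j else 1.
Definition gg (j : nat) (a : R) : R := 1 - 2 * Cc j * a + a ^+ 2.
Definition sig (s : nat -> R) (i : nat) : R := if odd i then - s (blk i) else s (blk i).

Lemma Ax (s : nat -> R) (x : 'cV[R]_n) (i : 'I_n) :
  (Amat m b c s *m x) i 0 =
  Cc (blk i) * x i 0 + (if (i < m.*2)%N then sig s i * x (pip i) 0 else 0).
Proof.
rewrite mxE (bigD1 i) //=.
case Hi: (i < m.*2)%N.
  rewrite (bigD1 (pip i)) /=; last by rewrite pi_neq.
  rewrite big1 ?addr0.
    rewrite !mxE eqxx blk_pi eqxx /Cc blk_le Hi odd_pi // /sig.
    by case: (odd i).
  move=> k /andP [Hk1 Hk2]; rewrite mxE eq_sym blk_eqP (negbTE Hk1) (negbTE Hk2).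
  by rewrite mul0r.
rewrite big1 ?addr0.
  rewrite !mxE eqxx /Cc blk_le Hi.
  by case: (odd i).
move=> k Hk; rewrite mxE eq_sym blk_eqP (negbTE Hk) pi_id ?Hi // (negbTE Hk).
by rewrite mul0r.
Qed.

Lemma AT (s : nat -> R) : (Amat m b c s)^T = Amat m b c (fun j => - s j).
Proof.
apply/matrixP => i k; rewrite !mxE.
have [E|E] := eqVneq (blk k) (blk i); last by [].
rewrite E.
by case: (_ <= _)%N => //; case: (odd i); case: (odd k); rewrite ?opprK.
Qed.

Definition WS (h : nat -> R) (x : 'cV[R]_n) : R := \sum_(i < n) h (blk i) * x i 0 ^+ 2.

Lemma Bx (M : 'M[R]_n) (a : R) (x : 'cV[R]_n) i :
  ((M - a%:M) *m x) i 0 = (M *m x) i 0 - a * x i 0.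
Proof. by rewrite mulmxBl mul_scalar_mx [LHS]mxE [X in _ + X]mxE [X in _ - X]mxE. Qed.

Lemma gg_in (s : nat -> R) j a : (j <= m)%N -> c j ^+ 2 + s j ^+ 2 = 1 ->
  gg j a = (c j - a) ^+ 2 + s j ^+ 2.
Proof. by move=> Hj HH; rewrite /gg /Cc Hj -{1}HH; ring. Qed.

Lemma WS_shift (s : nat -> R)
  (Hs : forall j, (1 <= j <= m)%N -> c j ^+ 2 + s j ^+ 2 = 1) h a x :
  WS h ((Amat m b c s - a%:M) *m x) = WS (fun j => h j * gg j a) x.
Proof.
rewrite /WS; apply: sum_pair => i.
rewrite !Bx !Ax piK blk_pi pi_lt.
case Hi: (i < m.*2)%N.
  have Hm : (blk i <= m)%N by rewrite blk_le.
  have HH : c (blk i) ^+ 2 + s (blk i) ^+ 2 = 1 by apply: Hs; rewrite Hm andbT.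
  rewrite (gg_in a Hm HH) /Cc Hm /sig odd_pi // blk_pi.
  by case: (odd i) => /=; ring.
rewrite /gg /Cc blk_le Hi pi_id ?Hi //; ring.
Qed.

Lemma rayqE (s : nat -> R) x : rayq (Amat m b c s) x = WS Cc x.
Proof.
rewrite /rayq -mulmxA mxE /WS; apply: sum_pair => i.
rewrite [(x^T) _ _]mxE [(x^T) _ _]mxE !Ax piK blk_pi pi_lt /Cc.
case Hi: (i < m.*2)%N.
  rewrite blk_le Hi /sig odd_pi // blk_pi.
  by case: (odd i) => /=; ring.
rewrite blk_le Hi pi_id ?Hi //; ring.
Qed.

End Mat.


Section WSgen.
Variable R : realType.
Variables (m : nat) (b : bool).
Local Notation n := (dimA m b).
Local Notation WS := (@WS R m b).

Lemma WS_ge0 (h : nat -> R) x : (forall j, (1 <= j)%N -> 0 <= h j) -> 0 <= WS h x.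
Proof. by move=> H; apply: sumr_ge0 => i _; rewrite mulr_ge0 ?sqr_ge0 ?H. Qed.

Lemma WS_le (h h' : nat -> R) x : (forall j, (1 <= j)%N -> h j <= h' j) -> WS h x <= WS h' x.
Proof. by move=> H; apply: ler_sum => i _; rewrite ler_wpM2r ?sqr_ge0 ?H. Qed.

Lemma WS_ext (h h' : nat -> R) x : (forall j, (1 <= j)%N -> h j = h' j) -> WS h x = WS h' x.
Proof. by move=> H; apply: eq_bigr => i _; rewrite H. Qed.

Lemma WS_scale (k : R) (h : nat -> R) x : WS (fun j => k * h j) x = k * WS h x.
Proof. by rewrite /WS mulr_sumr; apply: eq_bigr => i _; rewrite mulrA. Qed.

Lemma WS_add (h h' : nat -> R) x : WS (fun j => h j + h' j) x = WS h x + WS h' x.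
Proof. by rewrite /WS -big_split; apply: eq_bigr => i _ /=; rewrite mulrDl. Qed.

Lemma vnormE (x : 'cV[R]_n) : vnorm x = Num.sqrt (WS (fun _ => 1) x).
Proof. by rewrite /vnorm /WS; congr Num.sqrt; apply: eq_bigr => i _; rewrite mul1r. Qed.

Lemma WS_normalize h (x : 'cV[R]_n) :
  WS h (normalize x) = WS h x / WS (fun _ => 1) x.
Proof.
have H0 : 0 <= WS (fun _ => 1) x by apply: WS_ge0.
set S := WS (fun _ => 1) x.
rewrite /normalize vnormE -/S {1 2}/WS mulr_suml; apply: eq_bigr => i _.
rewrite mxE exprMn exprVn sqr_sqrtr //; ring.
Qed.

Lemma bnormE (x : 'cV[R]_n) j : bnorm x j = Num.sqrt (WS (fun k => (k == j)%:R) x).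
Proof.
rewrite /bnorm /WS big_mkcond; congr Num.sqrt; apply: eq_bigr => i _.
by case: (blk i == j); rewrite ?mul1r ?mul0r.
Qed.

End WSgen.


Lemma bernoulli (R : realType) (t : R) k : 0 <= t -> 1 + k%:R * t <= (1 + t) ^+ k.
Proof.
move=> Ht; elim: k => [|k IH]; first by rewrite mul0r addr0 expr0.
rewrite exprSr -natr1.
have H0 : 0 <= k%:R * t by rewrite mulr_ge0.
have : (1 + k%:R * t) * (1 + t) <= (1 + t) ^+ k * (1 + t) by rewrite ler_wpM2r //; lra.
have : 0 <= k%:R * t * t by rewrite mulr_ge0.
lra.
Qed.

Lemma geom_small (R : realType) (q K e : R) :
  0 < q -> q < 1 -> 0 <= K -> 0 < e -> exists k, q ^+ k * K <= e.
Proof.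
move=> Hq0 Hq1 HK He.
set t := q^-1 - 1.
have Ht : 0 < t.
  rewrite /t subr_gt0 -[1]invr1 ltf_pV2 ?posrE //.
have Hte : 0 < e * t by rewrite mulr_gt0.
have H0 : 0 <= K / (e * t) by rewrite divr_ge0 // ltW.
have := archi_boundP H0; set k := Num.Def.archi_bound _ => Hk.
exists k.
have E1 : 1 + t = q^-1 by rewrite /t; ring.
have Hb := bernoulli k (ltW Ht); rewrite E1 in Hb.
have HK2 : K <= e * (k%:R * t).
  move: Hk; rewrite ltr_pdivrMr // => Hk.
  have : K <= k%:R * (e * t) by apply: ltW.
  lra.
have HK3 : K <= e * q^-1 ^+ k.
  apply: le_trans HK2 _; rewrite ler_wpM2l ?(ltW He) //; lra.
have Hqk : 0 <= q ^+ k by rewrite exprn_ge0 // ltW.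
have : q ^+ k * K <= q ^+ k * (e * q^-1 ^+ k) by rewrite ler_wpM2l.
by rewrite mulrCA -exprMn mulfV ?gt_eqF // expr1n mulr1.
Qed.


Section Main.
Variable R : realType.
Variables (m : nat) (b : bool) (c s : nat -> R).
Hypothesis Hm0 : (0 < m)%N.
Hypothesis Hcs : forall j, (1 <= j <= m)%N -> c j ^+ 2 + s j ^+ 2 = 1.
Hypothesis Hs0 : forall j, (1 <= j <= m)%N -> s j != 0.
Hypothesis Hc1 : 0 < c 1%N.
Hypothesis Hmono : forall j, (1 <= j < m)%N -> c j < c j.+1.
Local Notation n := (dimA m b).
Local Notation WS := (@WS R m b).
Local Notation Cc := (Cc m c).
Local Notation gg := (gg m c).

Lemma c_le1 j : (1 <= j <= m)%N -> c j <= 1.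
Proof. move=> /Hcs H; nra. Qed.

Lemma c_mono i j : (1 <= i)%N -> (i <= j <= m)%N -> c i <= c j.
Proof.
move=> Hi /andP [Hij Hjm]; elim: j Hij Hjm => [|j IH] Hij Hjm.
  by move: Hi Hij; case: i.
rewrite leq_eqVlt in Hij; case/orP: Hij => [/eqP -> //|Hij].
apply: le_trans (IH Hij (ltnW Hjm)) _; apply/ltW/Hmono.
by rewrite Hjm andbT; apply: leq_trans Hi Hij.
Qed.

Lemma c1_lt1 : c 1%N < 1.
Proof.
have H := Hcs (j:=1%N); have Hs := Hs0 (j:=1%N).
rewrite Hm0 in H Hs; have {}H := H isT; have {}Hs := Hs isT.
have : 0 < s 1%N ^+ 2 by rewrite exprn_even_gt0.
nra.
Qed.

Definition dd : R := if (2 <= m)%N then c 2%N - c 1%N else 1 - c 1%N.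

Lemma dd_gt0 : 0 < dd.
Proof.
rewrite /dd; case: ifP => H2.
  by rewrite subr_gt0; apply: Hmono; rewrite H2.
by rewrite subr_gt0 c1_lt1.
Qed.

Lemma dd_le : c 1%N + dd <= 1.
Proof.
rewrite /dd; case: ifP => H2; last lra.
have := c_le1 (j:=2%N); rewrite H2 => /(_ isT); lra.
Qed.

Lemma Cc_bnd j : (1 <= j)%N -> c 1%N <= Cc j <= 1.
Proof.
move=> Hj; rewrite /Cc; case: ifP => Hjm.
  apply/andP; split; first by apply: c_mono => //; rewrite Hj Hjm.
  by apply: c_le1; rewrite Hj Hjm.
by rewrite lexx andbT; apply/ltW/c1_lt1.
Qed.

Lemma Cc_bnd2 j : (2 <= j)%N -> c 1%N + dd <= Cc j.
Proof.
move=> Hj; rewrite /Cc /dd; case Hjm: (j <= m)%N.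
  have H2 : (2 <= m)%N by move: Hj Hjm; lia.
  rewrite H2; have := c_mono (i:=2%N) (j:=j) isT; rewrite Hj Hjm => /(_ isT); lra.
case: ifP => H2; last lra.
have := c_le1 (j:=2%N); rewrite H2 => /(_ isT); lra.
Qed.

Definition qq : R := 1 - dd * c 1%N.

Lemma qq_gt0 : 0 < qq.
Proof.
rewrite /qq; have := dd_gt0; have := dd_le; have := c1_lt1 => H1 H2 H3.
have : dd * c 1%N <= (1 - c 1%N) * c 1%N by rewrite ler_wpM2r //; [apply/ltW | lra].
nra.
Qed.

Lemma qq_lt1 : qq < 1.
Proof. rewrite /qq; have := mulr_gt0 dd_gt0 Hc1; lra. Qed.

Lemma gg_ge0 j a : (1 <= j)%N -> 0 <= gg j a.
Proof.
move=> /Cc_bnd /andP [H1 H2]; rewrite /gg.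
have H3 : 0 <= (a - Cc j) ^+ 2 by apply: sqr_ge0.
have H4 : Cc j ^+ 2 <= 1 by have := Hc1; nra.
nra.
Qed.

Lemma gg1_gt0 a : 0 < gg 1%N a.
Proof.
have H := Hcs (j:=1%N); have Hs := Hs0 (j:=1%N).
rewrite Hm0 in H Hs; have {}H := H isT; have {}Hs := Hs isT.
rewrite (gg_in _ _ H) //.
have : 0 < s 1%N ^+ 2 by rewrite exprn_even_gt0.
have := sqr_ge0 (c 1%N - a); lra.
Qed.

Lemma gg_ratio j a : (2 <= j)%N -> c 1%N <= a <= 1 -> gg j a <= qq * gg 1%N a.
Proof.
move=> Hj /andP [Ha1 Ha2].
have HC := Cc_bnd2 Hj. have Hd := dd_gt0.
have E1 : Cc 1%N = c 1%N by rewrite /Cc Hm0.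
rewrite /gg E1 /qq.
have Hc := Hc1.
have h1 : 0 <= c 1%N * c 1%N * a by rewrite !mulr_ge0 //; lra.
have ha2 : a ^+ 2 <= 1 by nra.
have h2 : c 1%N * a ^+ 2 <= c 1%N * 1 by rewrite ler_wpM2l //; lra.
have Hg : c 1%N * (1 - 2 * c 1%N * a + a ^+ 2) <= 2 * a by lra.
have h3 : 0 <= dd * (2 * a - c 1%N * (1 - 2 * c 1%N * a + a ^+ 2)) by rewrite mulr_ge0 //; lra.
have h4 : Cc j * a >= (c 1%N + dd) * a by rewrite ler_wpM2r //; lra.
nra.
Qed.

Definition PP j (x : 'cV[R]_n) := WS (fun k => (k == j)%:R) x.
Definition TT (x : 'cV[R]_n) := WS (fun k => (k != 1%N)%:R) x.
Definition NN (x : 'cV[R]_n) := WS (fun _ => 1) x.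

Lemma NN_split x : NN x = PP 1 x + TT x.
Proof.
rewrite /PP /TT -WS_add; apply: WS_ext => k _.
by case: (k == 1%N); rewrite /= ?addr0 ?add0r.
Qed.

Lemma PP_ge0 j x : 0 <= PP j x.
Proof. by apply: WS_ge0 => k _; case: (k == j). Qed.

Lemma TT_ge0 x : 0 <= TT x.
Proof. by apply: WS_ge0 => k _; case: (k != 1%N). Qed.

Lemma rayq_bnd x : NN x = 1 -> c 1%N <= rayq (Amat m b c s) x <= 1.
Proof.
move=> HN; rewrite rayqE; apply/andP; split.
  have -> : c 1%N = WS (fun _ => c 1%N * 1) x by rewrite WS_scale -/(NN x) HN mulr1.
  by apply: WS_le => k Hk; rewrite mulr1; case/andP: (Cc_bnd Hk).
rewrite -HN; apply: WS_le => k Hk; by case/andP: (Cc_bnd Hk).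
Qed.

Lemma halfstep (s' : nat -> R)
  (Hs' : forall j, (1 <= j <= m)%N -> c j ^+ 2 + s' j ^+ 2 = 1) x a :
  NN x = 1 -> 0 < PP 1 x -> c 1%N <= a <= 1 ->
  let y := normalize ((Amat m b c s' - a%:M) *m x) in
  [/\ NN y = 1, 0 < PP 1 y, TT y * PP 1 x <= qq * TT x * PP 1 y
    & forall j, (2 <= j)%N -> PP j y * PP 1 x <= qq * PP j x].
Proof.
move=> HN HP Ha y.
set z := (Amat m b c s' - a%:M) *m x.
have Ez : forall h, WS h z = WS (fun k => h k * gg k a) x by move=> h; apply: WS_shift.
have Pjz : forall j, PP j z = gg j a * PP j x.
  move=> j; rewrite /PP Ez -WS_scale; apply: WS_ext => k _.
  by case: eqP => [->|_]; rewrite ?mul1r ?mulr1 ?mul0r ?mulr0.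
have Zge : PP 1 z <= NN z.
  rewrite /PP /NN !Ez; apply: WS_le => k Hk.
  by case: (k == 1%N); rewrite ?mul1r ?mul0r ?gg_ge0.
have Tz : TT z <= qq * gg 1%N a * TT x.
  rewrite /TT Ez -WS_scale; apply: WS_le => k Hk.
  case: eqP => [->|/eqP Hk1] /=; first by rewrite !mul0r mulr0.
  rewrite mul1r mulr1; apply: gg_ratio => //.
  by move: Hk Hk1; case: k => [|[|k]].
have g1 := gg1_gt0 a.
have P1z : 0 < PP 1 z by rewrite Pjz mulr_gt0.
have Z0 : 0 < NN z by apply: lt_le_trans P1z Zge.
have Ey : forall h, WS h y = WS h z / NN z by move=> h; rewrite /y WS_normalize.
have Hq := qq_gt0.
split.
- by rewrite /NN Ey -/(NN z) divff // gt_eqF.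
- by rewrite /PP Ey divr_gt0.
- rewrite /TT /PP !Ey -/(TT z) -/(PP 1 z) -/(TT x) Pjz.
  rewrite mulrAC ler_pdivrMr // -!mulrA mulVf ?gt_eqF // mulr1.
  have := TT_ge0 x; have := PP_ge0 1 x => H1 H2.
  have : TT z * PP 1 x <= qq * gg 1%N a * TT x * PP 1 x by rewrite ler_wpM2r.
  rewrite -/(PP 1 x); lra.
- move=> j Hj; rewrite /PP !Ey -!/(PP _ z) -/(PP j x) Pjz.
  rewrite mulrAC ler_pdivrMr //.
  have := PP_ge0 j x; have := PP_ge0 1 x => H1 H2.
  have Hr := gg_ratio (a:=a) Hj Ha.
  have h1 : gg j a * PP 1 x * PP j x <= qq * gg 1%N a * PP 1 x * PP j x.
    by rewrite ler_wpM2r // ler_wpM2r.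
  have h2 : gg 1%N a * PP 1 x <= NN z by rewrite -Pjz.
  have h3 : qq * PP j x * (gg 1%N a * PP 1 x) <= qq * PP j x * NN z.
    by rewrite ler_wpM2l // mulr_ge0 // ltW.
  rewrite -/(PP 1 x); lra.
Qed.

Local Notation A := (Amat m b c s).

Lemma Hsneg : forall j, (1 <= j <= m)%N -> c j ^+ 2 + (- s j) ^+ 2 = 1.
Proof. by move=> j Hj; rewrite sqrrN Hcs. Qed.

Lemma step v : NN v = 1 -> 0 < PP 1 v ->
  let w := aci_w A v in let v' := aci_step A v in
  [/\ NN w = 1, 0 < PP 1 w, TT w * PP 1 v <= qq * TT v * PP 1 w
    & forall j, (2 <= j)%N -> PP j w * PP 1 v <= qq * PP j v] /\
  [/\ NN v' = 1, 0 < PP 1 v', TT v' * PP 1 w <= qq * TT w * PP 1 v'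
    & forall j, (2 <= j)%N -> PP j v' * PP 1 w <= qq * PP j w].
Proof.
move=> HN HP w v'.
have H1 := halfstep Hcs HN HP (rayq_bnd HN).
have [HNw HPw _ _] := H1.
split; first exact: H1.
rewrite /v' /aci_step -/w AT.
exact: (@halfstep (fun j => - s j) Hsneg _ _ HNw HPw (rayq_bnd HNw)).
Qed.

Lemma ratio_prop (Ty Py Tx Px K : R) :
  0 < Px -> 0 <= Py -> Ty * Px <= qq * Tx * Py -> Tx <= K * Px -> Ty <= qq * K * Py.
Proof.
move=> HPx HPy H1 H2.
have Hq := qq_gt0.
have H3 : qq * Py * Tx <= qq * Py * (K * Px) by rewrite ler_wpM2l // mulr_ge0 // ltW.
have : Ty * Px <= (qq * K * Py) * Px by lra.
by rewrite ler_pM2r.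
Qed.

Section Iter.
Variable v0 : 'cV[R]_n.
Hypothesis HN0 : NN v0 = 1.
Hypothesis HP0 : 0 < PP 1 v0.
Let r0 := TT v0 / PP 1 v0.

Lemma r0_ge0 : 0 <= r0.
Proof. by rewrite divr_ge0 ?TT_ge0 ?PP_ge0. Qed.

Lemma inv k : let v := aci_v A v0 k in
  [/\ NN v = 1, 0 < PP 1 v & TT v <= qq ^+ k * r0 * PP 1 v].
Proof.
elim: k => [|k [HN HP HT]] /=.
  by rewrite expr0 mul1r /r0 mulfVK ?gt_eqF.
have [[HNw HPw HTw _] [HNv HPv HTv _]] := step HN HP.
split => //.
have Hw := ratio_prop HP (ltW HPw) HTw HT.
have Hv := ratio_prop HPw (ltW HPv) HTv Hw.
apply: le_trans Hv _.
have := qq_gt0; have := qq_lt1 => Hq1 Hq0.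
set P := PP 1 _; set X := qq ^+ k * r0.
have HX : 0 <= X by rewrite /X mulr_ge0 ?r0_ge0 // exprn_ge0 // ltW.
have HP' : 0 <= P by apply: PP_ge0.
have -> : qq ^+ k.+1 * r0 * P = qq * X * P by rewrite exprS /X; ring.
rewrite -[qq * (qq * X) * P]mulrA ler_piMl //; last exact: ltW.
by apply: mulr_ge0 => //; apply: mulr_ge0 => //; apply: ltW.
Qed.

Lemma main_iter : exists k0 : nat, exists rho : R,
    0 < rho < 1 /\
    forall k, (k0 <= k)%N ->
    forall j, (2 <= j)%N ->
      bnorm (aci_v A v0 k.+1) j <= rho * bnorm (aci_v A v0 k) j.
Proof.
have Hq0 := qq_gt0; have Hq1 := qq_lt1.
have He : 0 < (1 - qq) / 2 by lra.
have [k0 Hk0] := geom_small Hq0 Hq1 r0_ge0 He.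
exists k0, (Num.sqrt qq); split.
  rewrite sqrtr_gt0 Hq0 /= -sqrtr1 ltr_sqrt //; lra.
move=> k Hk j Hj.
set e := (1 - qq) / 2 in Hk0 He.
have He2 : e < 1 by rewrite /e; lra.
have HK : qq ^+ k * r0 <= e.
  apply: le_trans Hk0; rewrite ler_wpM2r ?r0_ge0 //.
  rewrite -(subnK Hk) exprD ler_piMl ?exprn_ge0 ?exprn_ile1 // ltW //.
have [HN HP HT] := inv k.
have [[HNw HPw HTw HJw] [HNv HPv HTv HJv]] := step HN HP.
set v := aci_v A v0 k in HN HP HT HNw HPw HTw HJw HNv HPv HTv HJv.
set w := aci_w A v in HNw HPw HTw HJw HNv HPv HTv HJv.
have Ev : aci_v A v0 k.+1 = aci_step A v by rewrite /aci_v iterS.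
rewrite Ev !bnormE -/(PP j _) -/(PP j v).
have Hw := ratio_prop HP (ltW HPw) HTw HT.
have HT' : TT v <= e * PP 1 v.
  by apply: le_trans HT _; rewrite ler_wpM2r ?PP_ge0.
have HTw' : TT w <= e * PP 1 w.
  apply: le_trans Hw _; rewrite ler_wpM2r ?PP_ge0 //.
  apply: le_trans HK; apply: ler_piMl; last exact: ltW.
  by apply: mulr_ge0; [apply: exprn_ge0; apply: ltW | apply: r0_ge0].
have Sv := NN_split v; have Sw := NN_split w.
have Tv0 := TT_ge0 v; have Tw0 := TT_ge0 w.
have P1v : 1 - e <= PP 1 v.
  have : e * PP 1 v <= e * 1 by rewrite ler_wpM2l; lra.
  lra.
have P1w : 1 - e <= PP 1 w.
  have : e * PP 1 w <= e * 1 by rewrite ler_wpM2l; lra.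
  lra.
have Hprod : qq <= PP 1 v * PP 1 w.
  have : (1 - e) * (1 - e) <= PP 1 v * PP 1 w.
    apply: le_trans (_ : (1 - e) * PP 1 w <= _).
      by rewrite ler_wpM2l //; lra.
    by rewrite ler_wpM2r //; lra.
  have : 0 <= e * e by rewrite mulr_ge0 //; lra.
  rewrite /e; lra.
have Jw := HJw j Hj; have Jv := HJv j Hj.
set a := PP j (aci_step A v) in Jv *.
have Ha : 0 <= a := PP_ge0 _ _.
have Pjw := PP_ge0 j w; have Pjv := PP_ge0 j v.
have H1 : a * PP 1 w * PP 1 v <= qq * PP j w * PP 1 v by rewrite ler_wpM2r // ltW.
have H2 : qq * (PP j w * PP 1 v) <= qq * (qq * PP j v) by rewrite ler_wpM2l // ltW.
have H3 : a * qq <= a * (PP 1 v * PP 1 w) by rewrite ler_wpM2l.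
have Hfin : a * qq <= qq * PP j v * qq by lra.
have Hfin2 : a <= qq * PP j v by move: Hfin; rewrite ler_pM2r.
rewrite -sqrtrM; last exact: ltW.
rewrite ler_sqrt //.
by apply: mulr_ge0 => //; apply: ltW.
Qed.

End Iter.

End Main.

Theorem lemma4p6 (R : realType) (m : nat) (b : bool) (c s : nat -> R)
  (v0 : 'cV[R]_(dimA m b)) :
  (0 < m)%N ->
  (forall j, (1 <= j <= m)%N -> c j ^+ 2 + s j ^+ 2 = 1) ->
  (forall j, (1 <= j <= m)%N -> s j != 0) ->
  0 < c 1%N ->
  (forall j, (1 <= j < m)%N -> c j < c j.+1) ->
  vnorm v0 = 1 ->
  (2 <= grade (Amat m b c s) v0)%N ->
  [exists i : 'I_(dimA m b), (blk i == 1%N) && (v0 i 0 != 0)] ->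
  exists k0 : nat, exists rho : R,
    0 < rho < 1 /\
    forall k, (k0 <= k)%N ->
    forall j, ((2 <= j <= m)%N || (b && (j == m.+1))) ->
      bnorm (aci_v (Amat m b c s) v0 k.+1) j
        <= rho * bnorm (aci_v (Amat m b c s) v0 k) j.
Proof.
move=> Hm0 Hcs Hs0 Hc1 Hmono Hv0 _ Hex.
have HN0 : NN v0 = 1.
  have H0 : 0 <= NN v0 by apply: WS_ge0.
  by rewrite -(sqr_sqrtr H0) /NN -vnormE Hv0 expr1n.
have HP0 : 0 < PP 1 v0.
  case/existsP: Hex => i /andP [Hi Hvi].
  rewrite /PP /WS (bigD1 i) //= Hi mul1r.
  have H1 : 0 < v0 i 0 ^+ 2 by rewrite exprn_even_gt0.
  have H2 : 0 <= \sum_(k < dimA m b | k != i) (blk k == 1%N)%:R * v0 k 0 ^+ 2.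
    by apply: sumr_ge0 => k _; rewrite mulr_ge0 ?sqr_ge0 //; case: (_ == _).
  lra.
have [k0 [rho [Hr H]]] := main_iter Hm0 Hcs Hs0 Hc1 Hmono HN0 HP0.
exists k0, rho; split => // k Hk j Hj; apply: H => //.
case/orP: Hj => [/andP [] //|/andP [_ /eqP ->]].
by rewrite ltnS.
Qed.
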